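(* Let $F\dashv G$ be a Galois connection between lattices $\mathcal{L}$ and $\mathcal{L}'$, and let $p:\mathcal{P}(I\times\mathcal{L})\to\mathcal{P}(O\times\mathcal{L})$ be a (partial) program. Then $\mathrm{MEF}^{F\dashv G}[p]$ is noninterfering.
   Context: A lattice means a partially ordered set $(\mathcal{L},\sqsubseteq)$ with least element $\bot$ in which any two elements have a least upper bound $\sqcup$; $\bigsqcup S$ denotes the least upper bound of a finite set ($\bigsqcup\emptyset=\bot$). A Galois connection $F\dashv G$ between $\mathcal{L}$ and $\mathcal{L}'$ is a pair $F:\mathcal{L}\to\mathcal{L}'$, $G:\mathcal{L}'\to\mathcal{L}$ with $F(\ell)\sqsubseteq_{\mathcal{L}'}\jmath\iff\ell\sqsubseteq_{\mathcal{L}}G(\jmath)$. For a function $H$ and set $S$, $H^*(S)=\{H(s):s\in S\}$. Labeled sets are finite subsets of $V\times\mathcal{L}$; write $a^\ell$ for $(a,\ell)$. For a labeled set $x$: $\mathcal{L}(x)=\{\ell : a^\ell\in x\}$; $x\downarrow\ell=\{a^\jmath\in x : \jmath\sqsubseteq\ell\}$; $x\sim_\ell y$ iff $x\downarrow\ell=y\downarrow\ell$; for $L\subseteq\mathcal{L}$, $x@L=\{a^\ell\in x : \ell\in L\}$. The closure set of finite $S$ is $C(S)=\{\bigsqcup S' : S'\subseteq S\}$ (computed in whichever lattice $S$ lives in); the up-set is $\ell\uparrow S=\{\jmath\in\mathcal{L} : \ell\sqsubseteq\jmath \text{ and } \forall\iota\in S.\ \iota\sqsubseteq\jmath\Rightarrow\iota\sqsubseteq\ell\}$.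 Define $C_{F\dashv G}(S)=G^*(C(F^*(S)))$ and $\mathrm{MEF}^{F\dashv G}[p](x)=\bigcup\{p(x\downarrow\ell)@(\ell\uparrow C_{F\dashv G}(\mathcal{L}(x))) : \ell\in C_{F\dashv G}(\mathcal{L}(x))\}$. A (partial) program $q:\mathcal{P}(I\times\mathcal{L})\to\mathcal{P}(O\times\mathcal{L})$ is noninterfering if for all $\ell\in\mathcal{L}$ and all $x,y$ with $x\sim_\ell y$ such that $q(x)$ and $q(y)$ are both defined, $q(x)\sim_\ell q(y)$. *)

(* Defs.v *)
From HB Require Import structures.
From mathcomp Require Import all_boot all_order.
From mathcomp Require Import finmap.

Set Implicit Arguments.
Unset Strict Implicit.
Unset Printing Implicit Defensive.

Import Order.Theory.
Local Open Scope order_scope.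
Local Open Scope fset_scope.

(* A "lattice" in the sense of the paper: a partial order with least element
   and binary least upper bounds, i.e. a bJoinSemilatticeType. *)

Section Defs.

Definition galois_conn {d d' : Order.disp_t}
  {L : bJoinSemilatticeType d} {L' : bJoinSemilatticeType d'}
  (F : L -> L') (G : L' -> L) : Prop :=
  forall (l : L) (j : L'), (F l <= j) = (l <= G j).

Definition lub {d} {L : bJoinSemilatticeType d} (S : {fset L}) : L :=
  \big[Order.join/Order.bottom]_(j <- S) j.

Definition labels {V : choiceType} {d} {L : bJoinSemilatticeType d}
  (x : {fset V * L}) : {fset L} := [fset a.2 | a in x].

Definition down {V : choiceType} {d} {L : bJoinSemilatticeType d}
  (x : {fset V * L}) (l : L) : {fset V * L} := [fset a in x | a.2 <= l].

Definition low_eq {V : choiceType} {d} {L : bJoinSemilatticeType d}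
  (l : L) (x y : {fset V * L}) : Prop := down x l = down y l.

Definition at_labels {V : choiceType} {d} {L : bJoinSemilatticeType d}
  (x : {fset V * L}) (P : pred L) : {fset V * L} := [fset a in x | P a.2].

Definition closure {d} {L : bJoinSemilatticeType d} (S : {fset L}) : {fset L} :=
  [fset lub S' | S' in fpowerset S].

Definition upset {d} {L : bJoinSemilatticeType d} (l : L) (S : {fset L}) : pred L :=
  fun j => (l <= j) && all (fun i => (i <= j) ==> (i <= l)) S.

Definition closureFG {d d'} {L : bJoinSemilatticeType d} {L' : bJoinSemilatticeType d'}
  (F : L -> L') (G : L' -> L) (S : {fset L}) : {fset L} :=
  [fset G j | j in closure [fset F l | l in S]].

Definition program (I O : choiceType) {d} (L : bJoinSemilatticeType d) :=
  {fset I * L} -> option {fset O * L}.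

(* MEF^{F -| G}[p](x): defined iff every p(x ↓ ℓ), ℓ in C_{F-|G}(L(x)), is defined. *)
Definition MEF {I O : choiceType} {d d'} {L : bJoinSemilatticeType d}
  {L' : bJoinSemilatticeType d'} (F : L -> L') (G : L' -> L)
  (p : program I O L) : program I O L :=
  fun x =>
    let C := closureFG F G (labels x) in
    if all (fun l => p (down x l) : bool) C then
      Some (\bigcup_(l <- C) at_labels (odflt fset0 (p (down x l))) (upset l C))
    else None.

Definition noninterfering {I O : choiceType} {d} {L : bJoinSemilatticeType d}
  (q : program I O L) : Prop :=
  forall (l : L) (x y : {fset I * L}) (qx qy : {fset O * L}),
    low_eq l x y -> q x = Some qx -> q y = Some qy -> low_eq l qx qy.

End Defs.

(* Main.v *)
Require Import Defs.
From HB Require Import structures.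
From mathcomp Require Import all_boot all_order.
From mathcomp Require Import finmap.

Set Implicit Arguments.
Unset Strict Implicit.
Import Order.Theory.
Local Open Scope order_scope.
Local Open Scope fset_scope.

Section Aux.
Variables (d d' : Order.disp_t) (L : bJoinSemilatticeType d) (L' : bJoinSemilatticeType d').
Variables (F : L -> L') (G : L' -> L).
Hypothesis gc : galois_conn F G.

Lemma lub_sup (S : {fset L'}) s : s \in S -> s <= lub S.
Proof. by move=> sS; rewrite /lub; apply: (joins_sup_seq (P:=predT)). Qed.

Lemma G_mono a b : a <= b -> G a <= G b.
Proof.
move=> ab; rewrite -gc; apply: le_trans ab; by rewrite gc.
Qed.

Lemma unitGF m : m <= G (F m).
Proof. by rewrite -gc. Qed.

Lemma closure_down (V : choiceType) (x : {fset V * L}) l k :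
  k \in closureFG F G (labels x) -> k <= l ->
  k \in closureFG F G (labels (down x l)).
Proof.
move=> /imfsetP[j /= jC ->] kl.
move: jC => /imfsetP[S' /= + Ej]; subst j; rewrite fpowersetE => /fsubsetP sub.
apply/imfsetP; exists (lub S') => //; apply/imfsetP; exists S' => //.
rewrite fpowersetE; apply/fsubsetP => s sS.
have := sub _ sS => /imfsetP[m /= + Es] => /imfsetP[a /= ax Em]; subst s m.
apply/imfsetP; exists a.2 => //; apply/imfsetP; exists a => //=.
rewrite /down inE; apply/andP; split => //=.
apply: le_trans kl; apply: le_trans (unitGF _) _; apply: G_mono.
exact: lub_sup.
Qed.

Lemma closure_sub (V : choiceType) (x : {fset V * L}) l k :
  k \in closureFG F G (labels (down x l)) -> k \in closureFG F G (labels x).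
Proof.
move=> /imfsetP[j /= + ->] => /imfsetP[S' /= + ->]; rewrite fpowersetE => /fsubsetP sub.
apply/imfsetP; exists (lub S') => //; apply/imfsetP; exists S' => //.
rewrite fpowersetE; apply/fsubsetP => s sS.
have := sub _ sS => /imfsetP[m /= + ->] => /imfsetP[a /= + ->].
rewrite /down inE /= => /andP[ax _].
apply/imfsetP; exists a.2 => //; apply/imfsetP; exists a => //=.
Qed.

Lemma closure_low (V : choiceType) (x y : {fset V * L}) l k :
  low_eq l x y -> k <= l ->
  k \in closureFG F G (labels x) -> k \in closureFG F G (labels y).
Proof.
move=> xy kl kx; apply: (@closure_sub _ _ l); rewrite -xy.
exact: closure_down.
Qed.

Lemma down_down (V : choiceType) (x : {fset V * L}) l k :
  k <= l -> down (down x l) k = down x k.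
Proof.
move=> kl; apply/fsetP => a; rewrite /down !inE /=.
case: (a \in x) => //=; case ak: (a.2 <= k); rewrite ?andbF ?andbT //.
exact: le_trans ak kl.
Qed.

Lemma down_low (V : choiceType) (x y : {fset V * L}) l k :
  low_eq l x y -> k <= l -> down x k = down y k.
Proof. by move=> xy kl; rewrite -(down_down x kl) -(down_down y kl) xy. Qed.

End Aux.

Lemma one_dir (d d' : Order.disp_t)
  (L : bJoinSemilatticeType d) (L' : bJoinSemilatticeType d')
  (F : L -> L') (G : L' -> L) (I O : choiceType) (p : program I O L) :
  galois_conn F G -> forall l x y qx qy a,
    low_eq l x y -> MEF F G p x = Some qx -> MEF F G p y = Some qy ->
    a \in qx -> a.2 <= l -> a \in qy.
Proof.
move=> gc l x y qx qy a xy; rewrite /MEF.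
case: ifP => // allx [<-]; case: ifP => // ally [<-].
move=> /bigfcupP[k /andP[kC _]]; rewrite /at_labels inE /= => /andP[ap].
move=> /andP[ka /allP up] al.
have kl : k <= l by apply: le_trans ka al.
have kCy := closure_low gc xy kl kC.
apply/bigfcupP; exists k; first by rewrite kCy.
rewrite (down_low xy kl) in ap.
rewrite /at_labels inE; apply/andP; split => //=.
apply/andP; split => //; apply/allP => i iC; apply/implyP => ia.
have il : i <= l by apply: le_trans ia al.
have iCx : i \in closureFG F G (labels x).
  by apply: (closure_low gc _ il iC); rewrite /low_eq.
by have := up i iCx => /implyP; apply.
Qed.

Theorem mainTheorem9 (d d' : Order.disp_t)
  (L : bJoinSemilatticeType d) (L' : bJoinSemilatticeType d')
  (F : L -> L') (G : L' -> L) (I O : choiceType) (p : program I O L) :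
  galois_conn F G -> noninterfering (MEF F G p).
Proof.
move=> gc l x y qx qy xy hx hy; apply/fsetP => a; rewrite /down !inE /=.
case al: (a.2 <= l); rewrite ?andbF ?andbT //.
apply/idP/idP => ha.
  exact: (one_dir gc xy hx hy ha al).
have yx : low_eq l y x by [].
exact: (one_dir gc yx hy hx ha al).
Qed.
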